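(* Let $\mu$ be an atomic probability measure on $\mathbb{R}$ consisting of exactly $m$ distinct atoms and let $\nu$ be an atomic probability measure consisting of exactly $n$ distinct atoms. Then $\mu\rhd\nu$ is an atomic probability measure consisting of exactly $mn$ distinct atoms.
   Context: For a probability measure $\mu$ on $\mathbb{R}$, $G_\mu(z)=\int\frac{1}{z-x}d\mu(x)$ on $\mathbb{C}^+$ and $H_\mu=1/G_\mu$. The monotone convolution $\mu\rhd\nu$ is the unique probability measure with $H_{\mu\rhd\nu}=H_\mu\circ H_\nu$ on $\mathbb{C}^+$. An atomic probability measure with $m$ distinct atoms is of the form $\sum_{k=1}^m\lambda_k\delta_{a_k}$ with $\lambda_k>0$ and distinct $a_k$. *)

(* Defs.v *)
From HB Require Import structures.
From mathcomp Require Import all_boot all_order all_algebra.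
From mathcomp Require Import all_classical all_reals all_analysis.
From mathcomp Require Import complex.
Set Implicit Arguments. Unset Strict Implicit. Unset Printing Implicit Defensive.
Import Order.TTheory GRing.Theory Num.Theory.
Import numFieldNormedType.Exports.
Local Open Scope classical_set_scope.
Local Open Scope ring_scope.
Local Open Scope complex_scope.

(* Cauchy transform G_mu(z) = \int 1/(z - x) dmu(x), a complex integral,
   i.e. (\int Re(1/(z-x)) dmu) + i (\int Im(1/(z-x)) dmu). *)
Definition cauchy_transform (R : realType) (mu : probability R R) (z : R[i])
  : R[i] :=
  ((Rintegral mu setT (fun x : R => complex.Re ((z - x%:C)^-1)))%:C
   + 'i%C * (Rintegral mu setT (fun x : R => complex.Im ((z - x%:C)^-1)))%:C).

Definition H_transform (R : realType) (mu : probability R R) (z : R[i]) : R[i] :=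
  (cauchy_transform mu z)^-1.

Definition is_monotone_convolution (R : realType) (mu nu rho : probability R R)
  : Prop :=
  forall z : R[i], 0 < complex.Im z -> H_transform rho z = H_transform mu (H_transform nu z).

Definition atomic_with (R : realType) (mu : probability R R) (m : nat) : Prop :=
  exists (a : 'I_m -> R) (lam : 'I_m -> R),
    injective a /\ (forall k, 0 < lam k) /\
    (forall A : set R, measurable A ->
       mu A = (\sum_(k < m) (lam k)%:E * \d_(a k) A)%E).

(* Main.v *)
Require Import Defs.
From HB Require Import structures.
From mathcomp Require Import all_boot all_order all_algebra all_field.
From mathcomp Require Import all_classical all_reals all_analysis.
From mathcomp Require Import measurable_realfun complex ring.
Set Implicit Arguments. Unset Strict Implicit. Unset Printing Implicit Defensive.

Module PA1.
Import Order.TTheory GRing.Theory Num.Theory.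
Local Open Scope ring_scope.

Section Polys.
Variable F : fieldType.
Variable n : nat.
Variable d : 'I_n -> F.

Definition Qp : {poly F} := \prod_(i < n) ('X - (d i)%:P).
Definition Qj (j : 'I_n) : {poly F} := \prod_(i < n | i != j) ('X - (d i)%:P).
Definition Pp (p : 'I_n -> F) : {poly F} := \sum_(j < n) p j *: Qj j.

Lemma Qp_split j : Qp = ('X - (d j)%:P) * Qj j.
Proof. by rewrite /Qp (bigD1 j). Qed.

Lemma size_Qp : size Qp = n.+1.
Proof. by rewrite /Qp size_prod_XsubC /index_enum -enumT size_enum_ord. Qed.

Lemma Qj_monic j : Qj j \is monic.
Proof. exact: monic_prod_XsubC. Qed.

Lemma size_Qj j : size (Qj j) = n.
Proof.
have := size_Qp; rewrite (Qp_split j) mulrC size_Mmonic ?monicXsubC ?monic_neq0 ?Qj_monic //.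
by rewrite size_XsubC addn2 => -[].
Qed.

Lemma Qj_coef j : (Qj j)`_n.-1 = 1.
Proof.
have := Qj_monic j; move/monicP; rewrite /lead_coef size_Qj => ->. done.
Qed.

Lemma Qj_eval_other i k : i != k -> (Qj i).[d k] = 0.
Proof.
move=> ik; rewrite /Qj horner_prod (bigD1 k) 1?eq_sym //=.
by rewrite !hornerE subrr mul0r.
Qed.

Lemma Qj_eval_self (i : 'I_n) : (Qj i).[d i] = \prod_(k < n | k != i) (d i - d k).
Proof. by rewrite /Qj horner_prod; apply: eq_bigr => k _; rewrite !hornerE. Qed.

Lemma Qj_eval_self_neq0 i : injective d -> (Qj i).[d i] != 0.
Proof.
move=> dI; rewrite Qj_eval_self; apply/prodf_neq0 => k ki.
by rewrite subr_eq0; apply/eqP => /dI /eqP; rewrite eq_sym (negbTE ki).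
Qed.

Lemma Pp_eval_d p k : (Pp p).[d k] = p k * (Qj k).[d k].
Proof.
rewrite /Pp horner_sum (bigD1 k) //= big1 ?addr0; first by rewrite hornerE.
by move=> i ik; rewrite hornerE Qj_eval_other ?mulr0.
Qed.

Lemma size_Pp p : (size (Pp p) <= n)%N.
Proof.
rewrite /Pp; apply: (leq_trans (size_sum _ _ _)).
apply/bigmax_leqP => j _; apply: (leq_trans (size_scale_leq _ _)).
by rewrite size_Qj.
Qed.

Lemma Pp_coef p : (Pp p)`_n.-1 = \sum_j p j.
Proof.
rewrite /Pp coef_sum; apply: eq_bigr => j _.
by rewrite coefZ Qj_coef mulr1.
Qed.

Lemma Qp_eval_neq0 z : (forall j, z != d j) -> Qp.[z] != 0.
Proof.
move=> zd; rewrite /Qp horner_prod; apply/prodf_neq0 => i _.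
by rewrite !hornerE subr_eq0.
Qed.

Lemma Qp_eval_eq0 z : Qp.[z] = 0 -> exists j, z = d j.
Proof.
rewrite /Qp horner_prod => /eqP/prodf_eq0 [j _]; rewrite !hornerE subr_eq0 => /eqP ->.
by exists j.
Qed.

Lemma QP_eval p z : (forall j, z != d j) ->
  \sum_j p j / (z - d j) = (Pp p).[z] / Qp.[z].
Proof.
move=> zd; rewrite /Pp horner_sum mulr_suml; apply: eq_bigr => j _.
rewrite hornerE (Qp_split j) hornerM !hornerE.
have h1 : z - d j != 0 by rewrite subr_eq0.
have h2 : (Qj j).[z] != 0.
  rewrite /Qj horner_prod; apply/prodf_neq0 => i _; by rewrite !hornerE subr_eq0.
by field; rewrite h1 h2.
Qed.

Lemma Qderiv_aux j : (Qj j) * Qp^`() - Qp * (Qj j)^`() = (Qj j) ^+ 2.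
Proof.
rewrite (Qp_split j) derivM derivXsubC mul1r; ring.
Qed.

Lemma key_deriv p : Pp p * Qp^`() - Qp * (Pp p)^`() = \sum_j p j *: (Qj j ^+ 2).
Proof.
rewrite /Pp raddf_sum mulr_suml mulr_sumr -sumrB; apply: eq_bigr => j _.
rewrite [X in Qp * X]derivZ -scalerAl -scalerAr -scalerBr Qderiv_aux //.
Qed.

End Polys.

End PA1.
Import PA1.

Module PA2.
Import Order.TTheory GRing.Theory Num.Theory.
Local Open Scope ring_scope.
Local Open Scope complex_scope.
Local Notation ReC := complex.Re.
Local Notation ImC := complex.Im.

Lemma sum_pos (R : numDomainType) n (F : 'I_n -> R) i :
  (forall j, 0 <= F j) -> 0 < F i -> 0 < \sum_j F j.
Proof.
move=> F0 Fi; rewrite (bigD1 i) //=; apply: (lt_le_trans Fi).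
by rewrite lerDl; apply: sumr_ge0.
Qed.

Section Maps.
Variables (F K : fieldType) (f : {rmorphism F -> K}).
Lemma map_Qp n (d : 'I_n -> F) : map_poly f (Qp d) = Qp (fun j => f (d j)).
Proof. rewrite /Qp rmorph_prod; apply: eq_bigr => i _. exact: map_polyXsubC. Qed.
Lemma map_Qj n (d : 'I_n -> F) j : map_poly f (Qj d j) = Qj (fun j => f (d j)) j.
Proof. by rewrite /Qj rmorph_prod; apply: eq_bigr => i _; exact: map_polyXsubC. Qed.
Lemma map_Pp n (d p : 'I_n -> F) : map_poly f (Pp d p) = Pp (fun j => f (d j)) (fun j => f (p j)).
Proof. by rewrite /Pp rmorph_sum; apply: eq_bigr => i _; rewrite /= map_polyZ map_Qj. Qed.
End Maps.

Section Cplx.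
Variable R : rcfType.

Lemma ImD (x y : R[i]) : ImC (x + y) = ImC x + ImC y. Proof. by case: x => ? ?; case: y. Qed.
Lemma ReD (x y : R[i]) : ReC (x + y) = ReC x + ReC y. Proof. by case: x => ? ?; case: y. Qed.
Lemma Im_inv (x : R[i]) : ImC x^-1 = - ImC x / (ReC x ^+ 2 + ImC x ^+ 2).
Proof. by case: x => a b /=; rewrite mulNr. Qed.
Lemma Re_inv (x : R[i]) : ReC x^-1 = ReC x / (ReC x ^+ 2 + ImC x ^+ 2).
Proof. by case: x => a b /=. Qed.
Lemma ImrM (c : R) (x : R[i]) : ImC (c%:C * x) = c * ImC x.
Proof. by case: x => a b /=; rewrite mul0r addr0. Qed.
Lemma RerM (c : R) (x : R[i]) : ReC (c%:C * x) = c * ReC x.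
Proof. by case: x => a b /=; rewrite mul0r subr0. Qed.
Lemma ImB_real (z : R[i]) (c : R) : ImC (z - c%:C) = ImC z.
Proof. by case: z => a b /=; rewrite oppr0 addr0. Qed.
Lemma ReB_real (z : R[i]) (c : R) : ReC (z - c%:C) = ReC z - c.
Proof. by case: z. Qed.
Lemma Im_sum n (F : 'I_n -> R[i]) : ImC (\sum_j F j) = \sum_j ImC (F j).
Proof. by apply: (big_morph _ ImD). Qed.
Lemma Re_sum n (F : 'I_n -> R[i]) : ReC (\sum_j F j) = \sum_j ReC (F j).
Proof. by apply: (big_morph _ ReD). Qed.

Lemma ImG_formula n (d p : 'I_n -> R) (z : R[i]) :
  ImC (\sum_j (p j)%:C / (z - (d j)%:C)) =
  - ImC z * \sum_j p j / ((ReC z - d j) ^+ 2 + ImC z ^+ 2).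
Proof.
rewrite Im_sum mulr_sumr; apply: eq_bigr => j _.
rewrite ImrM Im_inv ImB_real ReB_real. ring.
Qed.

Lemma den_pos (x y : R) : y != 0 -> 0 < x ^+ 2 + y ^+ 2.
Proof.
move=> y0; apply: (lt_le_trans (_ : 0 < y ^+ 2)); first by rewrite exprn_even_gt0.
by rewrite lerDr sqr_ge0.
Qed.

Lemma ImG_neq0 n (d p : 'I_n -> R) (z : R[i]) : (0 < n)%N -> (forall j, 0 < p j) ->
  ImC z != 0 -> ImC (\sum_j (p j)%:C / (z - (d j)%:C)) != 0.
Proof.
move=> n0 p0 z0; rewrite ImG_formula mulf_neq0 ?oppr_eq0 //.
rewrite lt0r_neq0 //; apply: (@sum_pos _ _ _ (Ordinal n0)) => [j|].
  by apply/ltW/divr_gt0; [exact: p0| exact: den_pos].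
by apply/divr_gt0; [exact: p0| exact: den_pos].
Qed.

End Cplx.

End PA2.
Import PA2.

Module PA3.
Import Order.TTheory GRing.Theory Num.Theory.
Local Open Scope ring_scope.
Local Open Scope complex_scope.
Local Notation ReC := complex.Re.
Local Notation ImC := complex.Im.

Lemma not_uniq_dup (T : eqType) (r : seq T) : ~~ uniq r ->
  exists z r1, perm_eq r (z :: z :: r1).
Proof.
elim: r => [//|x r IH] /=; rewrite negb_and negbK; case/orP=> [xr|nu].
  by exists x, (rem x r); rewrite perm_cons perm_to_rem.
have [z [r1 pr]] := IH nu; exists z, (x :: r1).
apply: (perm_trans (_ : perm_eq _ (x :: z :: z :: r1))); first by rewrite perm_cons.
by rewrite -[x :: _]/([:: x] ++ [:: z; z] ++ r1) perm_catCA.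
Qed.

Section Main.
Variable R : rcfType.

Lemma pos_key n (d p : 'I_n -> R) (x : R) : (0 < n)%N -> injective d -> (forall j, 0 < p j) ->
  0 < (Pp d p).[x] * (Qp d)^`().[x] - (Qp d).[x] * (Pp d p)^`().[x].
Proof.
move=> n0 dI p0.
have -> : (Pp d p).[x] * (Qp d)^`().[x] - (Qp d).[x] * (Pp d p)^`().[x] =
   (Pp d p * (Qp d)^`() - Qp d * (Pp d p)^`()).[x] by rewrite !hornerE.
rewrite key_deriv horner_sum.
have [j0 Hj0] : exists j0, (Qj d j0).[x] != 0.
  case: (pselect (exists j, x = d j)) => [[j ->]|nx].
    by exists j; apply: Qj_eval_self_neq0.
  exists (Ordinal n0); rewrite /Qj horner_prod; apply/prodf_neq0 => i _.
  by rewrite !hornerE subr_eq0; apply/eqP => e; apply: nx; exists i.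
apply: (@sum_pos _ _ _ j0) => [j|]; rewrite hornerZ hornerE.
  by apply: mulr_ge0; [exact: ltW | exact: sqr_ge0].
by apply: mulr_gt0 => //; rewrite exprn_even_gt0.
Qed.

Lemma alg_main n (d p : 'I_n -> R) (a : R) : (0 < n)%N -> injective d -> (forall j, 0 < p j) ->
 exists b w : 'I_n -> R, [/\ injective b, (forall i, w i != 0), \sum_i w i = \sum_j p j,
   (forall i, (Qp d).[b i] = a * (Pp d p).[b i] /\ (Pp d p).[b i] != 0) &
   forall z : R[i], ImC z != 0 ->
     ((\sum_j (p j)%:C / (z - (d j)%:C))^-1 - a%:C)^-1 = \sum_i (w i)%:C / (z - (b i)%:C)].
Proof.
move=> n0 dI p0.
set P := Pp d p; set Q := Qp d; set Rp := Q - a *: P.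
have sizeP : (size P <= n)%N by apply: size_Pp.
have sizeQ : size Q = n.+1 by apply: size_Qp.
have sizeaP : (size (- (a *: P)) < size Q)%N.
  by rewrite size_polyN sizeQ ltnS (leq_trans (size_scale_leq _ _)).
have Rmon : lead_coef Rp = 1.
  rewrite /Rp lead_coefDl //; apply/monicP; exact: monic_prod_XsubC.
have sizeR : size Rp = n.+1 by rewrite /Rp size_polyDl.
pose f := real_complex R.
pose dC j := f (d j); pose pC j := f (p j).
pose QC := Qp dC; pose PC := Pp dC pC.
have mapQ : map_poly f Q = QC by apply: map_Qp.
have mapP_ : map_poly f P = PC by apply: map_Pp.
have mapR : map_poly f Rp = QC - f a *: PC by rewrite -mapQ -mapP_ -map_polyZ -rmorphB.
have [r Hr] := closed_field_poly_normal (map_poly f Rp).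
rewrite lead_coef_map Rmon rmorph1 scale1r in Hr.
have sr : size r = n.
  have := size_map_poly f Rp; rewrite Hr size_prod_XsubC sizeR; by case.
have Gdef : forall z : R[i], ImC z != 0 -> (forall j, z != dC j) /\
   \sum_j (p j)%:C / (z - (d j)%:C) = PC.[z] / QC.[z] /\ QC.[z] != 0 /\ PC.[z] != 0.
  move=> z z0.
  have zd : forall j, z != dC j.
    by move=> j; apply/eqP => e; move: z0; rewrite e /= eqxx.
  have QC0 : QC.[z] != 0 by apply: Qp_eval_neq0.
  have GE : \sum_j (p j)%:C / (z - (d j)%:C) = PC.[z] / QC.[z] by apply: QP_eval.
  split => //; split => //; split => //.
  apply/eqP => PC0; have := ImG_neq0 d n0 p0 z0; by rewrite GE PC0 mul0r eqxx.
have root_real : forall z, QC.[z] = f a * PC.[z] -> ImC z = 0.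
  move=> z e; apply/eqP; apply/negP => /negP z0.
  have [zd [GE [QC0 PC0]]] := Gdef z z0.
  have a0 : a != 0 by apply: contra QC0; rewrite e => /eqP ->; rewrite /f rmorph0 mul0r.
  have := ImG_neq0 d n0 p0 z0; rewrite GE e invfM mulrCA divff // mulr1.
  by rewrite -rmorphV ?unitfE // eqxx.
have RCz : forall z, (map_poly f Rp).[z] = QC.[z] - f a * PC.[z].
  by move=> z; rewrite mapR !hornerE.
have all_real : forall z, z \in r -> z = (ReC z)%:C.
  move=> z zr; have : root (map_poly f Rp) z by rewrite Hr root_prod_XsubC.
  rewrite /root RCz subr_eq0 => /eqP /root_real.
  by case: z {zr} => x y /= ->.
have Rp_real : forall x : R, (map_poly f Rp).[x%:C] = (Rp.[x])%:C.
  by move=> x; rewrite -[x%:C]/(f x) horner_map.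
have uniq_r : uniq r.
  apply/negPn/negP => /not_uniq_dup [z [r1 pr]].
  have zr : z \in r by rewrite (perm_mem pr) inE eqxx.
  set x := ReC z.
  have Hz : z = x%:C by apply: all_real.
  have E : map_poly f Rp = ('X - z%:P) * (('X - z%:P) * \prod_(y <- r1) ('X - y%:P)).
    by rewrite Hr (perm_big _ pr) /= !big_cons.
  have D0 : (map_poly f Rp)^`().[z] = 0.
    by rewrite E derivM hornerD !hornerM !hornerXsubC subrr !(mul0r, mulr0, add0r).
  have R0 : (map_poly f Rp).[z] = 0.
    by rewrite E !hornerM !hornerXsubC subrr !mul0r.
  rewrite deriv_map Hz -[x%:C]/(f x) horner_map in D0.
  rewrite Hz Rp_real in R0.
  have D0' : Rp^`().[x] = 0 by move: D0 => /eqP; rewrite -[f _ == 0]/(_ == _%:C) => /eqP [].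
  have R0' : Rp.[x] = 0 by case: R0.
  have := pos_key x n0 dI p0.
  move: D0' R0'; rewrite /Rp derivB derivZ !hornerE => /eqP; rewrite subr_eq0 => /eqP e1.
  move/eqP; rewrite subr_eq0 => /eqP e2.
  rewrite -/P -/Q e1 e2.
  have -> : P.[x] * (a * P^`().[x]) - a * P.[x] * P^`().[x] = 0 by ring.
  by rewrite ltxx.
pose b (i : 'I_n) := ReC (nth 0 r i).
have nthr : forall i : 'I_n, nth 0 r i \in r by move=> i; rewrite mem_nth // sr.
have bE : forall i, (b i)%:C = nth 0 r i by move=> i; rewrite /b -all_real.
have bI : injective b.
  move=> i j /(congr1 (real_complex R)); rewrite -[real_complex R _]/((b i)%:C).
  rewrite -[real_complex R _]/((b j)%:C) !bE => /eqP; rewrite nth_uniq ?sr //.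
  by move/eqP/val_inj.
pose bC i := (b i)%:C.
have RCfact : map_poly f Rp = Qp bC.
  rewrite Hr (big_nth 0) big_mkord sr /Qp; apply: eq_bigr => i _; by rewrite /bC bE.
have Rp_b : forall i, Rp.[b i] = 0.
  move=> i; have : (map_poly f Rp).[bC i] = 0.
    by rewrite RCfact (Qp_split _ i) hornerM hornerXsubC subrr mul0r.
  by rewrite Rp_real => -[].
have QPb : forall i, Q.[b i] = a * P.[b i].
  by move=> i; apply/eqP; rewrite -subr_eq0; have := Rp_b i; rewrite /Rp !hornerE => ->.
have Pb0 : forall i, P.[b i] != 0.
  move=> i; apply/negP => /eqP P0.
  have := QPb i; rewrite P0 mulr0 => /Qp_eval_eq0 [j bj].
  move: P0; rewrite bj /P Pp_eval_d => /eqP; rewrite mulf_eq0 (negbTE (Qj_eval_self_neq0 _ dI)) orbF.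
  by rewrite (gt_eqF (p0 j)).
pose w i := P.[b i] / (Qj b i).[b i].
have Lag : P = Pp b w.
  apply/eqP; rewrite -subr_eq0; apply/negPn/negP => D0.
  have := max_poly_roots D0 (rs := map b (enum 'I_n)).
  rewrite map_inj_uniq // enum_uniq size_map size_enum_ord.
  have -> : all (root (P - Pp b w)) [seq b i | i <- enum 'I_n].
    apply/allP => x /mapP [k _ ->]; rewrite /root hornerD hornerN Pp_eval_d /w.
    by rewrite divfK ?subrr // Qj_eval_self_neq0.
  move=> /(_ isT isT); apply/negP; rewrite -leqNgt.
  apply: (leq_trans (size_polyD _ _)); by rewrite size_polyN geq_max !size_Pp.
have wsum : \sum_i w i = \sum_j p j by rewrite -(Pp_coef b w) -Lag Pp_coef.
exists b, w; split; [exact: bI| | exact: wsum | |].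
- move=> i; rewrite mulf_neq0 ?invr_eq0 ?Qj_eval_self_neq0 //.
- by move=> i; split; [exact: QPb | exact: Pb0].
move=> z z0; have [zd [GE [QC0 PC0]]] := Gdef z z0.
have zb : forall i, z != bC i.
  by move=> i; apply/eqP => e; move: z0; rewrite e /= eqxx.
have RC0 : (map_poly f Rp).[z] != 0 by rewrite RCfact; apply: Qp_eval_neq0.
have PCb : PC = Pp bC (fun i => (w i)%:C) by rewrite -mapP_ Lag map_Pp.
have eqR : \sum_i (w i)%:C / (z - (b i)%:C) = (Pp bC (fun i => (w i)%:C)).[z] / (Qp bC).[z].
  exact: QP_eval.
rewrite eqR -PCb -RCfact GE.
move: RC0; rewrite RCz => RC0.
rewrite -[a%:C]/(f a).
field; rewrite PC0 QC0 RC0 //.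
Qed.

End Main.

End PA3.
Import PA3.

Module PM1.
Import Order.TTheory GRing.Theory Num.Theory.
Import numFieldNormedType.Exports.
Local Open Scope classical_set_scope.
Local Open Scope ring_scope.

Section Atomic.
Variable R : realType.
Local Open Scope ereal_scope.

Lemma atomic_integral_ge0 (mu : measure R R) m (a lam : 'I_m -> R) :
  (forall k, (0 <= lam k)%R) ->
  (forall A, measurable A -> mu A = \sum_(k < m) (lam k)%:E * \d_(a k) A) ->
  forall g : R -> \bar R, (forall x, 0 <= g x) -> measurable_fun setT g ->
  \int[mu]_x g x = \sum_(k < m) (lam k)%:E * g (a k).
Proof.
move=> lam0 muE g g0 mg.
pose lamN (k : nat) : R := if @insub _ _ 'I_m k is Some i then lam i else 0%R.
have lamN0 : forall k, (0 <= lamN k)%R by move=> k; rewrite /lamN; case: insub.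
pose aN (k : nat) : R := if @insub _ _ 'I_m k is Some i then a i else 0%R.
pose m_ : (measure R R)^nat := fun k => mscale (NngNum (lamN0 k)) (\d_(aN k)).
have insE : forall k : 'I_m, @insub _ _ 'I_m k = Some k by move=> k; rewrite valK.
have m_E : forall k A, m_ k A = (lamN k)%:E * \d_(aN k) A by [].
rewrite (eq_measure_integral (msum m_ m)); last first.
  move=> A mA _; rewrite muE //= /msum; apply: eq_bigr => k _.
  by rewrite m_E /lamN /aN insE.
rewrite ge0_integral_measure_sum //; apply: eq_bigr => k _.
rewrite ge0_integral_mscale //= integral_dirac // diracT mul1e.
by rewrite /lamN /aN insE.
Qed.


Lemma maxr_posneg (x : R) : (Num.max x 0 - Num.max (- x) 0 = x)%R.
Proof.
case: (lerP 0 x) => x0.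
  rewrite (_ : Num.max (- x) 0 = 0)%R ?subr0 //.
  by apply/max_idPr; rewrite oppr_le0.
rewrite (_ : Num.max (- x) 0 = - x)%R ?sub0r ?opprK //.
by apply/max_idPl; rewrite oppr_ge0 ltW.
Qed.

Lemma atomic_Rintegral (mu : measure R R) m (a lam : 'I_m -> R) :
  (forall k, (0 <= lam k)%R) ->
  (forall A, measurable A -> mu A = \sum_(k < m) (lam k)%:E * \d_(a k) A) ->
  forall f : R -> R, measurable_fun setT f ->
  (\int[mu]_(x in setT) f x)%R = (\sum_(k < m) lam k * f (a k))%R.
Proof.
move=> lam0 muE f mf.
have mEf : measurable_fun setT (EFin \o f) by apply/measurable_EFinP.
rewrite /Rintegral integralE.
rewrite (atomic_integral_ge0 lam0 muE (@funepos_ge0 _ _ _) (measurable_funepos mEf)).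
rewrite (atomic_integral_ge0 lam0 muE (@funeneg_ge0 _ _ _) (measurable_funeneg mEf)).
have -> : \sum_(k < m) (lam k)%:E * (EFin \o f)^\+ (a k) =
    (\sum_(k < m) lam k * Num.max (f (a k)) 0)%:E.
  rewrite -sumEFin; apply: eq_bigr => k _.
  by rewrite funeposE /= -EFin_max EFinM.
have -> : \sum_(k < m) (lam k)%:E * (EFin \o f)^\- (a k) =
    (\sum_(k < m) lam k * Num.max (- f (a k)) 0)%:E.
  rewrite -sumEFin; apply: eq_bigr => k _.
  by rewrite funenegE /= -EFin_max EFinM.
rewrite -EFinB /= -sumrB; apply: eq_bigr => k _.
by rewrite -mulrBr maxr_posneg.
Qed.

End Atomic.

End PM1.
Import PM1.

Module PM2.
Import Order.TTheory GRing.Theory Num.Theory.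
Import numFieldNormedType.Exports.
Local Open Scope classical_set_scope.
Local Open Scope ring_scope.

Section Cont.
Variable R : realType.

Lemma cont_den (c e : R) : continuous (fun x : R => (c - x) ^+ 2 + e ^+ 2).
Proof.
move=> x; apply: cvgD; last exact: cvg_cst.
under eq_fun do rewrite expr2.
by apply: cvgM; apply: cvgB; try exact: cvg_cst; exact: cvg_id.
Qed.

Lemma den_neq0 (c e x : R) : e != 0 -> (c - x) ^+ 2 + e ^+ 2 != 0.
Proof.
move=> e0; rewrite gt_eqF //; apply: (lt_le_trans (_ : 0 < e ^+ 2)).
  by rewrite exprn_even_gt0.
by rewrite lerDr sqr_ge0.
Qed.

Lemma cont_re (c e : R) : e != 0 -> continuous (fun x : R => (c - x) / ((c - x) ^+ 2 + e ^+ 2)).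
Proof.
move=> e0 x; apply: cvgM.
  by apply: cvgB; [exact: cvg_cst | exact: cvg_id].
by apply: cvgV; [exact: den_neq0 | exact: cont_den].
Qed.

Lemma cont_im (c e : R) : e != 0 -> continuous (fun x : R => - e / ((c - x) ^+ 2 + e ^+ 2)).
Proof.
move=> e0 x; apply: cvgM; first exact: cvg_cst.
by apply: cvgV; [exact: den_neq0 | exact: cont_den].
Qed.

End Cont.

End PM2.
Import PM2.

Module PM3.
Import Order.TTheory GRing.Theory Num.Theory.
Import numFieldNormedType.Exports.
Local Open Scope classical_set_scope.
Local Open Scope ring_scope.
Local Open Scope complex_scope.
Local Notation ReC := complex.Re.
Local Notation ImC := complex.Im.

Section CT.
Variable R : realType.

Lemma Re_kernel (z : R[i]) (x : R) :
  ReC ((z - x%:C)^-1) = (ReC z - x) / ((ReC z - x) ^+ 2 + ImC z ^+ 2).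
Proof. by rewrite Re_inv ReB_real ImB_real. Qed.

Lemma Im_kernel (z : R[i]) (x : R) :
  ImC ((z - x%:C)^-1) = - ImC z / ((ReC z - x) ^+ 2 + ImC z ^+ 2).
Proof. by rewrite Im_inv ReB_real ImB_real. Qed.

Lemma meas_Re_kernel (z : R[i]) : ImC z != 0 ->
  measurable_fun setT (fun x : R => ReC ((z - x%:C)^-1)).
Proof.
move=> z0; rewrite (_ : (fun x => _) = (fun x => (ReC z - x) / ((ReC z - x) ^+ 2 + ImC z ^+ 2))).
  by apply: continuous_measurable_fun; apply: cont_re.
by apply/funext => x; rewrite Re_kernel.
Qed.

Lemma meas_Im_kernel (z : R[i]) : ImC z != 0 ->
  measurable_fun setT (fun x : R => ImC ((z - x%:C)^-1)).
Proof.
move=> z0; rewrite (_ : (fun x => _) = (fun x => - ImC z / ((ReC z - x) ^+ 2 + ImC z ^+ 2))).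
  by apply: continuous_measurable_fun; apply: cont_im.
by apply/funext => x; rewrite Im_kernel.
Qed.

Lemma cauchy_atomic (mu : probability R R) m (a lam : 'I_m -> R) :
  (forall k, 0 <= lam k) ->
  (forall A, measurable A -> mu A = (\sum_(k < m) (lam k)%:E * \d_(a k) A)%E) ->
  forall z : R[i], ImC z != 0 ->
  cauchy_transform mu z = \sum_(k < m) (lam k)%:C / (z - (a k)%:C).
Proof.
move=> lam0 muE z z0; rewrite /cauchy_transform.
rewrite (atomic_Rintegral lam0 muE (meas_Re_kernel z0)).
rewrite (atomic_Rintegral lam0 muE (meas_Im_kernel z0)).
rewrite !(rmorph_sum (real_complex R)) mulr_sumr -big_split /=.
apply: eq_bigr => k _.
rewrite !rmorphM /= mulrCA -mulrDr.
by rewrite [X in _ = _ * X]complexE.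
Qed.

End CT.

End PM3.
Import PM3.

Module PM4.
Import Order.TTheory GRing.Theory Num.Theory.
Import numFieldNormedType.Exports.
Local Open Scope classical_set_scope.
Local Open Scope ring_scope.
Local Open Scope complex_scope.
Local Notation ReC := complex.Re.
Local Notation ImC := complex.Im.

Section Mass.
Variable R : realType.

Definition gk (e t x : R) : R := e ^+ 2 / ((t - x) ^+ 2 + e ^+ 2).

Lemma Im_cauchy (mu : probability R R) z :
  ImC (cauchy_transform mu z) = Rintegral mu setT (fun x : R => ImC ((z - x%:C)^-1)).
Proof. by rewrite /cauchy_transform /=; ring. Qed.

Lemma Im_kernel_bound (z : R[i]) (x : R) : 0 < ImC z ->
  `| ImC ((z - x%:C)^-1) | <= (ImC z)^-1.
Proof.
move=> z0; rewrite Im_kernel.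
set e := ImC z; set D := (ReC z - x) ^+ 2 + e ^+ 2.
have De : (e ^+ 2 <= D)%R by rewrite /D lerDr sqr_ge0.
have Dpos : (0 < D)%R by apply: lt_le_trans De; rewrite exprn_even_gt0 // lt0r_neq0.
have h : (e / D <= e^-1)%R.
  by rewrite ler_pdivrMr // mulrC ler_pdivlMr // -expr2.
rewrite mulNr normrN ger0_norm //; apply: divr_ge0; [exact: ltW | exact: ltW].
Qed.


Lemma int_g (rho : probability R R) N (beta c : 'I_N -> R) :
  (forall z : R[i], 0 < ImC z -> cauchy_transform rho z = \sum_j (c j)%:C / (z - (beta j)%:C)) ->
  forall e t : R, (0 < e)%R -> Rintegral rho setT (gk e t) = (\sum_j c j * gk e t (beta j))%R.
Proof.
move=> Hc e t e0.
pose z : R[i] := t +i* e.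
have z0 : (0 < ImC z)%R by [].
have gE : forall x, gk e t x = (- e * ImC ((z - x%:C)^-1))%R.
  by move=> x; rewrite Im_kernel /gk /=; ring.
rewrite (eq_Rintegral _ (g := fun x : R => - e * ImC((z - x%:C)^-1))%R); last by move=> x _; rewrite -gE.
rewrite RintegralZl //; last first.
  apply: (@le_integrable _ _ _ _ _ measurableT _ (EFin \o cst (e^-1)%R)).
  - by apply/measurable_EFinP; apply: meas_Im_kernel; rewrite gt_eqF.
  - move=> x _ /=; rewrite lee_fin.
    exact: le_trans (Im_kernel_bound x z0) (ler_norm _).
  - exact: finite_measure_integrable_cst.
rewrite -Im_cauchy Hc // ImG_formula /= !mulr_sumr; apply: eq_bigr => j _.
rewrite /gk; ring.
Qed.


Lemma cont_gk (e t : R) : e != 0 -> continuous (gk e t).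
Proof.
move=> e0 x; apply: cvgM; first exact: cvg_cst.
by apply: cvgV; [exact: den_neq0 | exact: cont_den].
Qed.

Lemma gk_ge0 e t x : (0 <= gk e t x)%R.
Proof. by rewrite /gk divr_ge0 // ?sqr_ge0 // addr_ge0 // sqr_ge0. Qed.

Lemma gk_le1 e t x : e != 0 -> (gk e t x <= 1)%R.
Proof.
move=> e0; rewrite /gk ler_pdivrMr ?mul1r ?lerDr ?sqr_ge0 //.
by rewrite lt0r den_neq0 // addr_ge0 // sqr_ge0.
Qed.

Lemma gk_lim (t x : R) :
  gk (harmonic n) t x @[n --> \oo] --> (if x == t then (1 : R) else 0)%R.
Proof.
case: eqP => [->|xt].
  have E : forall n, gk (harmonic n) t t = 1%R.
    move=> n; rewrite /gk subrr expr0n /= add0r divff //.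
  by under eq_cvg do rewrite E; exact: cvg_cst.
pose h (e : R) := (e ^+ 2 / ((t - x) ^+ 2 + e ^+ 2))%R.
have h0 : h 0 = 0%R by rewrite /h expr0n /= mul0r.
have ch : {for 0%R, continuous h}.
  apply: cvgM.
    by under eq_fun do rewrite expr2; apply: cvgM; exact: cvg_id.
  apply: cvgV.
    rewrite expr0n /= addr0 expf_neq0 // subr_eq0; apply/eqP => e; apply: xt.
    by rewrite e.
  apply: cvgD; first exact: cvg_cst.
  by under eq_fun do rewrite expr2; apply: cvgM; exact: cvg_id.
rewrite -h0; apply: (cvg_comp _ _ cvg_harmonic ch).
Qed.


Lemma atom_mass (rho : probability R R) N (beta c : 'I_N -> R) :
  (forall z : R[i], 0 < ImC z -> cauchy_transform rho z = \sum_j (c j)%:C / (z - (beta j)%:C)) ->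
  forall t : R, rho [set t] = (\sum_j (if beta j == t then c j else 0))%:E.
Proof.
move=> Hc t.
pose f_ (n : nat) (x : R) := (gk (harmonic n) t x)%:E.
pose f (x : R) : \bar R := ((\1_[set t] x : R)%:E).
have hn0 : forall n, harmonic n != 0 :> R by move=> n; rewrite gt_eqF // harmonic_gt0.
have mf_ : forall n, measurable_fun setT (f_ n).
  move=> n; apply/measurable_EFinP; apply: continuous_measurable_fun.
  exact: cont_gk.
have mf : measurable_fun setT f.
  by apply/measurable_EFinP; apply: measurable_indic; exact: measurable_set1.
have conv : (\forall x \ae rho, setT x -> f_ ^~ x @ \oo --> f x)%classic.
  apply: aeW => x _; rewrite /f_ /f.
  have -> : \1_[set t] x = (if x == t then (1 : R) else 0)%R.
    rewrite indicE; case: eqP => [->|xt]; first by rewrite mem_set.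
    by rewrite memNset.
  apply: cvg_EFin; first by apply: nearW.
  exact: gk_lim.
have gint : rho.-integrable setT (EFin \o cst 1%R).
  exact: finite_measure_integrable_cst.
have dom : (\forall x \ae rho, forall n, setT x -> (`|f_ n x| <= (EFin \o cst 1%R) x)%E)%classic.
  apply: aeW => x n _; rewrite /f_ /= lee_fin ger0_norm ?gk_ge0 //.
  exact: gk_le1.
have [_ _ H] := dominated_convergence measurableT mf_ mf conv gint dom.
rewrite /f integral_indic ?setIT in H; last exact: measurable_set1.
have fin : rho [set t] \is a fin_num by apply: fin_num_measure; exact: measurable_set1.
have H1 : (fun n => fine (\int[rho]_x f_ n x)%E) @ \oo --> fine (rho [set t]).
  by apply: fine_cvg; rewrite fineK.
have H2 : (fun n => Rintegral rho setT (gk (harmonic n) t)) @ \oo -->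
    (\sum_j (if beta j == t then c j else 0))%R.
  have E : forall n, Rintegral rho setT (gk (harmonic n) t) =
      (\sum_j c j * gk (harmonic n) t (beta j))%R.
    by move=> n; apply: int_g => //; exact: harmonic_gt0.
  under eq_cvg do rewrite E.
  have -> : (\sum_j (if beta j == t then c j else 0) =
      \sum_j c j * (if beta j == t then (1 : R) else 0))%R.
    by apply: eq_bigr => j _; case: ifP; rewrite ?mulr1 ?mulr0.
  apply: cvg_big => [|j _]; first exact: add_continuous.
  by apply: cvgM; [exact: cvg_cst | exact: gk_lim].
rewrite -(fineK fin); congr EFin.
apply: (cvg_unique _ H1 H2); first exact: Rhausdorff.
exact: measurableT.
Qed.

End Mass.

End PM4.
Import PM4.

Module PM5.
Import Order.TTheory GRing.Theory Num.Theory.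
Import numFieldNormedType.Exports.
Local Open Scope classical_set_scope.
Local Open Scope ring_scope.
Local Open Scope complex_scope.
Local Notation ReC := complex.Re.
Local Notation ImC := complex.Im.

Section Final.
Variable R : realType.

Lemma bigsetU_memP (T : Type) N (F : 'I_N -> set T) x :
  (\big[setU/set0]_(j < N) F j) x <-> exists j, F j x.
Proof.
suff H : forall r : seq 'I_N, (\big[setU/set0]_(j <- r) F j) x <-> exists2 j, j \in r & F j x.
  rewrite H; split => [[j _ Fj]|[j Fj]]; first by exists j.
  by exists j => //; rewrite mem_index_enum.
elim=> [|j r IH]; rewrite ?big_nil ?big_cons.
  by split => // -[].
split.
  case=> [Fj|/IH [k kr Fk]]; first by exists j => //; rewrite inE eqxx.
  by exists k => //; rewrite inE kr orbT.
move=> [k]; rewrite inE => /orP [/eqP -> Fj|kr Fk]; first by left.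
by right; apply/IH; exists k.
Qed.

Local Open Scope ereal_scope.

Lemma final_meas (rho : probability R R) N (beta c : 'I_N -> R) :
  injective beta -> (forall j, c j != 0%R) -> (\sum_j c j = 1)%R ->
  (forall z : R[i], (0 < ImC z)%R ->
     cauchy_transform rho z = (\sum_j (c j)%:C / (z - (beta j)%:C))%R) ->
  atomic_with rho N.
Proof.
move=> bI c0 c1 Hc.
have mass : forall j, rho [set beta j] = (c j)%:E.
  move=> j; rewrite (atom_mass Hc) (bigD1 j) //= eqxx big1 ?addr0 //.
  by move=> i ij; case: eqP => // /bI /eqP; rewrite (negbTE ij).
have cpos : forall j, (0 < c j)%R.
  move=> j; rewrite lt0r c0 /= -lee_fin -mass; exact: measure_ge0.
pose B := \big[setU/set0]_(j < N) [set beta j].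
have mB : measurable B by apply: bigsetU_measurable => j _; exact: measurable_set1.
have inter : forall A, measurable A ->
    rho (A `&` B) = \sum_(j < N) (c j)%:E * \d_(beta j) A.
  move=> A mA.
  have -> : A `&` B = \big[setU/set0]_(j < N) (A `&` [set beta j]).
    apply/seteqP; split => x.
      by move=> [Ax /bigsetU_memP [j bj]]; apply/bigsetU_memP; exists j.
    move=> /bigsetU_memP [j [Ax bj]]; split => //; apply/bigsetU_memP.
    by exists j.
  rewrite measure_semi_additive_ord //.
  - apply: eq_bigr => j _; rewrite diracE.
    case: (boolP (beta j \in A)) => bA.
      rewrite mule1 -mass; congr (rho _); apply/seteqP; split => x.
        by move=> [].
      by move=> ->; split => //; apply/set_mem.
    rewrite mule0 (_ : _ `&` _ = set0) ?measure0 //; apply/seteqP; split => x //.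
    by move=> [Ax bx]; move: bA; rewrite -bx (mem_set Ax).
  - by move=> j; apply: measurableI => //; exact: measurable_set1.
  - apply/trivIsetP => i j _ _ ij; apply/seteqP; split => x // [[_ ->] [_ /bI e]].
    by move: ij; rewrite e eqxx.
  - by apply: bigsetU_measurable => j _; apply: measurableI => //; exact: measurable_set1.
have rhoB : rho B = 1.
  have := inter setT measurableT; rewrite setTI => ->.
  rewrite (eq_bigr (fun j => (c j)%:E)) ?sumEFin ?c1 //.
  by move=> j _; rewrite diracE mem_set // mule1.
exists beta, c; split => //; split => // A mA.
rewrite (measureDI rho mA mB).
rewrite [X in X + _ = _](_ : _ = 0); first by rewrite add0e -inter.
apply/eqP; rewrite eq_le measure_ge0 andbT.
have : rho (setT `\` B) = 0.
  have e1 : (1 : \bar R) = rho (setT `\` B) + rho (setT `&` B) :=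
    etrans (esym (probability_setT rho)) (measureDI rho measurableT mB).
  have h : rho (setT `\` B) + 1 = 1 :=
    esym (etrans e1 (congr1 _ (etrans (congr1 rho (setTI B)) rhoB))).
  have f1 : (1 : \bar R) \is a fin_num by [].
  by rewrite -(addeK (rho (setT `\` B)) f1) h subee.
move=> <-; apply: le_measure; rewrite ?inE //.
- exact: measurableD.
- exact: measurableD.
- by move=> x [_ nB]; split.
Qed.

End Final.

End PM5.
Import PM5.

Module PMain.
Import Order.TTheory GRing.Theory Num.Theory.
Import numFieldNormedType.Exports.
Local Open Scope classical_set_scope.
Local Open Scope ring_scope.
Local Open Scope complex_scope.
Local Notation ReC := complex.Re.
Local Notation ImC := complex.Im.

Lemma atomic_sum (R : realType) (mu : probability R R) m (a lam : 'I_m -> R) :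
  (forall A, measurable A -> mu A = (\sum_(k < m) (lam k)%:E * \d_(a k) A)%E) ->
  \sum_k lam k = 1.
Proof.
move=> muE.
have e : (1%E : \bar R) = (\sum_(k < m) (lam k)%:E * \d_(a k) setT)%E :=
  etrans (esym (probability_setT mu)) (muE setT measurableT).
move: e; under eq_bigr do rewrite diracT mule1.
by rewrite sumEFin => -[].
Qed.

Lemma Im_inv_neq0 (R : rcfType) (w : R[i]) : ImC w != 0 -> ImC w^-1 != 0.
Proof.
move=> w0; rewrite Im_inv mulf_neq0 ?oppr_eq0 ?invr_eq0 //.
by rewrite gt_eqF // den_pos.
Qed.

Lemma corollary3p3_aux (R : realType) (mu nu rho : probability R R) (m n : nat) :
  atomic_with mu m -> atomic_with nu n ->
  is_monotone_convolution mu nu rho ->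
  atomic_with rho (m * n).
Proof.
move=> [a [lam [aI [lam0 muE]]]] [d [p [dI [p0 nuE]]]] Hconv.
have slam := atomic_sum muE.
have sp := atomic_sum nuE.
have n0 : (0 < n)%N.
  by case: n d p dI p0 nuE sp => // d p _ _ _; rewrite big_ord0 => /eqP; rewrite eq_sym oner_eq0.
have Hk : forall k : 'I_m, exists bw : ('I_n -> R) * ('I_n -> R),
   [/\ injective bw.1, (forall i, bw.2 i != 0), \sum_i bw.2 i = \sum_j p j,
   (forall i, (Qp d).[bw.1 i] = a k * (Pp d p).[bw.1 i] /\ (Pp d p).[bw.1 i] != 0) &
   forall z : R[i], ImC z != 0 ->
     ((\sum_j (p j)%:C / (z - (d j)%:C))^-1 - (a k)%:C)^-1 =
       \sum_i (bw.2 i)%:C / (z - (bw.1 i)%:C)].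
  move=> k; have [b [w H]] := alg_main (a k) n0 dI p0.
  by exists (b, w).
have [bw Hbw] := fin_all_exists Hk.
pose b k i := (bw k).1 i; pose w k i := (bw k).2 i.
pose T := ('I_m * 'I_n)%type.
have cardT : #|{: T}| = (m * n)%N by rewrite card_prod !card_ord.
pose e (j : 'I_(m * n)) : T := enum_val (cast_ord (esym cardT) j).
pose einv (x : T) : 'I_(m * n) := cast_ord cardT (enum_rank x).
have eK : cancel e einv by move=> j; rewrite /e /einv enum_valK cast_ordKV.
have eKV : cancel einv e by move=> x; rewrite /e /einv cast_ordK enum_rankK.
pose beta (x : T) := b x.1 x.2.
pose c (x : T) := lam x.1 * w x.1 x.2.
apply: (@final_meas R rho (m * n) (fun j => beta (e j)) (fun j => c (e j))).
- move=> j1 j2 /= H; apply: (can_inj eK).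
  move: H; rewrite /beta; case: (e j1) => k1 i1; case: (e j2) => k2 i2 /= H.
  have [bI1 _ _ Hq1 _] := Hbw k1; have [bI2 _ _ Hq2 _] := Hbw k2.
  have kk : k1 = k2.
    apply: aI; have [q1 P1] := Hq1 i1; have [q2 P2] := Hq2 i2.
    rewrite -/(b k1 i1) -/(b k2 i2) H in q1 P1.
    by apply: (mulIf P1); rewrite -q1 -q2.
  by subst k2; rewrite (bI1 _ _ H).
- move=> j; have [_ h _ _ _] := Hbw (e j).1.
  by rewrite /c mulf_neq0 ?h // lt0r_neq0.
- have E : \sum_(x : T) c x = \sum_j c (e j).
    exact: (reindex e (onW_bij _ (Bijective eK eKV))).
  rewrite -E -(pair_bigA _ (fun k i => c (k, i))) /=.
  rewrite -slam; apply: eq_bigr => k _; rewrite /c /= -mulr_sumr.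
  by have [_ _ -> _ _] := Hbw k; rewrite sp mulr1.
move=> z z0.
have zn0 : ImC z != 0 by rewrite gt_eqF.
have Gnu : cauchy_transform nu z = \sum_j (p j)%:C / (z - (d j)%:C).
  by apply: cauchy_atomic => // j; apply: ltW.
have Hnu : H_transform nu z = (\sum_j (p j)%:C / (z - (d j)%:C))^-1 by rewrite /H_transform Gnu.
have ImH : ImC (H_transform nu z) != 0.
  by rewrite Hnu; apply: Im_inv_neq0; apply: ImG_neq0.
have Grho : cauchy_transform rho z = cauchy_transform mu (H_transform nu z).
  rewrite -(invrK (cauchy_transform rho z)) -/(H_transform rho z) Hconv //.
  by rewrite /H_transform invrK.
rewrite Grho (cauchy_atomic _ muE ImH); last by move=> k; apply: ltW.
have E : \sum_(x : T) (c x)%:C / (z - (beta x)%:C) =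
    \sum_j (c (e j))%:C / (z - (beta (e j))%:C).
  exact: (reindex e (onW_bij _ (Bijective eK eKV))).
rewrite -E -(pair_bigA _ (fun k i => (c (k, i))%:C / (z - (beta (k, i))%:C))) /=.
apply: eq_bigr => k _.
have [_ _ _ _ Hz] := Hbw k.
rewrite Hnu mulrC -[(_ - _)^-1]/(((\sum_j (p j)%:C / (z - (d j)%:C))^-1 - (a k)%:C)^-1).
rewrite Hz // mulr_suml; apply: eq_bigr => i _.
by rewrite /c /beta /w /b /= rmorphM /= mulrC mulrA.
Qed.

End PMain.
Import PMain.


Theorem corollary3p3 (R : realType) (mu nu rho : probability R R) (m n : nat) :
  atomic_with mu m -> atomic_with nu n ->
  is_monotone_convolution mu nu rho ->
  atomic_with rho (m * n).
Proof. exact: corollary3p3_aux. Qed.
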